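(* Let $G$ be an infinite group acting on a set $X$ on the left, and let $\mathfrak{F}$ be a family of subsets of $X$ that is $G$-invariant and upward directed. Then $\mathfrak{F}$ is $\mathfrak{F}$-packing large if and only if, for every $A\in\mathfrak{F}$, the set $\Delta_{\mathfrak{F}}(A)=\{g\in G: gA\cap A\in\mathfrak{F}\}$ is a Ramsey $(-1,1)$-product subset of $G$.
   Context: $\mathfrak{F}$ is $G$-invariant if $A\in\mathfrak{F}$, $g\in G$ imply $gA\in\mathfrak{F}$; upward directed if $A\in\mathfrak{F}$, $A\subseteq C\subseteq X$ imply $C\in\mathfrak{F}$. (Under these assumptions $\{g: gB\subseteq A$ for some $B\in\mathfrak{F}, B\subseteq A\}=\{g: gA\cap A\in\mathfrak{F}\}$.) A family $\mathfrak{F}'$ of subsets of $X$ is $\mathfrak{F}$-disjoint if $A\cap B\notin\mathfrak{F}$ for all distinct $A,B\in\mathfrak{F}'$. A family $\mathfrak{F}'$ is $\mathfrak{F}$-packing large if for each $A\in\mathfrak{F}'$ every $\mathfrak{F}$-disjoint family of sets of the form $gA$, $g\in G$, is finite. A subset $R\subseteq G$ is a Ramsey $(-1,1)$-product subset if every infinite $Y\subseteq G$ contains distinct $y_1,y_2$ with $y_1^{-1}y_2\in R$ and $y_2^{-1}y_1\in R$. *)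

(* Defs.v *)
From Stdlib Require Import List.
Set Implicit Arguments.

Definition is_group (G : Type) (mul : G -> G -> G) (inv : G -> G) (e : G) : Prop :=
  (forall a b c, mul (mul a b) c = mul a (mul b c)) /\
  (forall a, mul e a = a) /\ (forall a, mul a e = a) /\
  (forall a, mul (inv a) a = e) /\ (forall a, mul a (inv a) = e).

Definition is_left_action (G X : Type) (mul : G -> G -> G) (e : G)
  (act : G -> X -> X) : Prop :=
  (forall x, act e x = x) /\ (forall g h x, act (mul g h) x = act g (act h x)).

Definition finite_set (T : Type) (S : T -> Prop) : Prop :=
  exists l : list T, forall t, S t -> In t l.
Definition infinite_type (T : Type) : Prop := ~ exists l : list T, forall t, In t l.

Definition set_eq (X : Type) (A B : X -> Prop) : Prop := forall x, A x <-> B x.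

Definition finite_family (X : Type) (Fm : (X -> Prop) -> Prop) : Prop :=
  exists l : list (X -> Prop), forall A, Fm A -> exists B, In B l /\ set_eq A B.

Definition inter (X : Type) (A B : X -> Prop) : X -> Prop := fun x => A x /\ B x.

Definition translate (G X : Type) (act : G -> X -> X) (g : G) (A : X -> Prop) : X -> Prop :=
  fun x => exists a, A a /\ x = act g a.

Definition G_invariant (G X : Type) (act : G -> X -> X) (F : (X -> Prop) -> Prop) : Prop :=
  forall A g, F A -> F (translate act g A).

Definition upward_directed (X : Type) (F : (X -> Prop) -> Prop) : Prop :=
  forall A C, F A -> (forall x, A x -> C x) -> F C.

Definition F_disjoint (X : Type) (F Fp : (X -> Prop) -> Prop) : Prop :=
  forall A B, Fp A -> Fp B -> ~ set_eq A B -> ~ F (inter A B).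

Definition F_packing_large (G X : Type) (act : G -> X -> X)
  (F Fp : (X -> Prop) -> Prop) : Prop :=
  forall A, Fp A ->
    forall Fam : (X -> Prop) -> Prop,
      (forall B, Fam B -> exists g, set_eq B (translate act g A)) ->
      F_disjoint F Fam -> finite_family Fam.

Definition ramsey_m11_product (G : Type) (mul : G -> G -> G) (inv : G -> G)
  (R : G -> Prop) : Prop :=
  forall Y : G -> Prop, ~ finite_set Y ->
    exists y1 y2, Y y1 /\ Y y2 /\ y1 <> y2 /\
      R (mul (inv y1) y2) /\ R (mul (inv y2) y1).

Definition Delta (G X : Type) (act : G -> X -> X) (F : (X -> Prop) -> Prop)
  (A : X -> Prop) : G -> Prop :=
  fun g => F (inter (translate act g A) A).

(* Main.v *)
Require Import Defs.
From Stdlib Require Import List Classical ClassicalEpsilon FunctionalExtensionality PropExtensionality.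

Lemma pigeon (G S : Type) (R : G -> S -> Prop) (l : list S) :
  forall Y : G -> Prop, ~ finite_set Y ->
  (forall y, Y y -> exists B, In B l /\ R y B) ->
  exists y1 y2 B, Y y1 /\ Y y2 /\ y1 <> y2 /\ R y1 B /\ R y2 B.
Proof.
  induction l as [|B l IH]; intros Y HY Hc.
  - exfalso; apply HY; exists nil; intros t Ht.
    destruct (Hc t Ht) as [B [[] _]].
  - destruct (classic (exists y1 y2, Y y1 /\ Y y2 /\ y1 <> y2 /\ R y1 B /\ R y2 B))
      as [[y1 [y2 H]]|Hno].
    + exists y1, y2, B; tauto.
    + destruct (IH (fun y => Y y /\ ~ R y B)) as [y1 [y2 [B' H]]].
      * intros [l' Hl']. apply HY.
        destruct (classic (exists y0, Y y0 /\ R y0 B)) as [[y0 [Hy0 Ry0]]|Hn].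
        -- exists (y0 :: l'). intros t Ht.
           destruct (classic (R t B)) as [Rt|Rt].
           ++ destruct (classic (t = y0)) as [->|Hne]; [left; reflexivity|].
              exfalso; apply Hno; exists t, y0; tauto.
           ++ right; apply Hl'; tauto.
        -- exists l'. intros t Ht. apply Hl'. split; [exact Ht|].
           intro Rt; apply Hn; eauto.
      * intros y [Hy HnR]. destruct (Hc y Hy) as [B' [[<-|HB'] HR]].
        -- contradiction.
        -- eauto.
      * exists y1, y2, B'; tauto.
Qed.

Lemma set_ext (X : Type) (A B : X -> Prop) : set_eq A B -> A = B.
Proof.
  intro H; apply functional_extensionality; intro x;
  apply propositional_extensionality; apply H.
Qed.

Section S.
Variables (G X : Type) (mul : G -> G -> G) (inv : G -> G) (e : G)
  (act : G -> X -> X) (F : (X -> Prop) -> Prop)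
  (HG : is_group mul inv e) (Hact : is_left_action mul e act)
  (Hinv : G_invariant act F) (Hup : upward_directed F).

Lemma actinv g a : act (inv g) (act g a) = a.
Proof.
  destruct HG as [Ga [Gb [Gc [Gd Ge]]]]; destruct Hact as [H1 H2].
  rewrite <- H2, Gd, H1; reflexivity.
Qed.

Lemma actmul g h a : act g (act (mul (inv g) h) a) = act h a.
Proof.
  destruct HG as [Ga [Gb [Gc [Gd Ge]]]]; destruct Hact as [H1 H2].
  rewrite <- H2, <- Ga, Ge, Gb; reflexivity.
Qed.

Lemma actmul' g h a : act (inv g) (act h a) = act (mul (inv g) h) a.
Proof. destruct Hact as [H1 H2]; rewrite H2; reflexivity. Qed.

Lemma L1 A g h : F (inter (translate act g A) (translate act h A)) ->
  F (inter (translate act (mul (inv g) h) A) A).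
Proof.
  intro H. apply (fun H0 => Hinv _ (inv g) H0) in H. apply (Hup _ _ H).
  intros x [w [[[a [Ha ->]] [b [Hb Eb]]] ->]]. split.
  - exists b; split; [exact Hb|]. rewrite Eb; apply actmul'.
  - rewrite actinv; exact Ha.
Qed.

Lemma L2 A g h : F (inter (translate act (mul (inv g) h) A) A) ->
  F (inter (translate act h A) (translate act g A)).
Proof.
  intro H. apply (fun H0 => Hinv _ g H0) in H. apply (Hup _ _ H).
  intros x [w [[[a [Ha ->]] Hw] ->]]. split.
  - exists a; split; [exact Ha|]. apply actmul.
  - exists (act (mul (inv g) h) a); split; auto.
Qed.

Lemma icomm (A B : X -> Prop) : F (inter A B) -> F (inter B A).
Proof. intro H; apply (Hup _ _ H); intros x [? ?]; split; auto. Qed.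

End S.

Theorem proposition5p6 (G X : Type) (mul : G -> G -> G) (inv : G -> G) (e : G)
  (act : G -> X -> X) (F : (X -> Prop) -> Prop)
  (HG : is_group mul inv e) (Hact : is_left_action mul e act)
  (Hinf : infinite_type G)
  (Hinv : G_invariant act F) (Hup : upward_directed F) :
  F_packing_large act F F <->
  (forall A, F A -> ramsey_m11_product mul inv (Delta act F A)).
Proof.
  split.
  - intros HP A HA Y HY. apply NNPP; intro Hno.
    assert (Hpair : forall y1 y2, Y y1 -> Y y2 -> y1 <> y2 ->
              ~ F (inter (translate act y1 A) (translate act y2 A))).
    { intros y1 y2 H1 H2 Hne HF. apply Hno. exists y1, y2.
      repeat split; auto; unfold Delta.
      - eapply L1; eauto; auto.
      - eapply L1; eauto; auto. apply icomm; auto. }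
    destruct (HP A HA (fun B => exists y, Y y /\ B = translate act y A)) as [l Hl].
    + intros B [y [_ ->]]. exists y; intro; tauto.
    + intros B1 B2 [y1 [H1 ->]] [y2 [H2 ->]] Hne.
      apply Hpair; auto. intros ->; apply Hne; intro; tauto.
    + destruct (pigeon _ _ (fun y B => set_eq (translate act y A) B) l Y HY)
        as [y1 [y2 [B [H1 [H2 [Hne [R1 R2]]]]]]].
      * intros y Hy. destruct (Hl (translate act y A)) as [B [HB HS]].
        { eauto. } exists B; split; auto.
      * apply (Hpair y1 y2 H1 H2 Hne).
        apply (Hup (translate act y1 A)); [apply Hinv; exact HA|].
        intros x Hx; split; auto. apply R2, R1, Hx.
  - intros HR A HA Fam HFam Hdis. apply NNPP; intro Hnf.
    assert (Hc : forall B, exists g, Fam B -> set_eq B (translate act g A)).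
    { intro B. destruct (classic (Fam B)) as [HB|HB].
      - destruct (HFam B HB) as [g Hg]; exists g; auto.
      - exists e; intro; contradiction. }
    set (c := fun B => proj1_sig (constructive_indefinite_description _ (Hc B))).
    assert (Hcs : forall B, Fam B -> set_eq B (translate act (c B) A)).
    { intro B; unfold c; destruct (constructive_indefinite_description _ (Hc B)); auto. }
    destruct (HR A HA (fun g => exists B, Fam B /\ g = c B)) as
        [y1 [y2 [[B1 [HB1 ->]] [[B2 [HB2 ->]] [Hne [D1 D2]]]]]].
    + intros [l Hl]. apply Hnf. exists (map (fun g => translate act g A) l).
      intros B HB. exists (translate act (c B) A). split; auto.
      apply (in_map (fun g => translate act g A)), Hl; eauto.
    + unfold Delta in D1. eapply L2 in D1; eauto.
      apply (Hdis B2 B1 HB2 HB1).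
      * intro Hs. apply set_ext in Hs. subst; auto.
      * apply (Hup _ _ D1). intros x [Hx1 Hx2]; split.
        -- apply (Hcs B2 HB2), Hx1.
        -- apply (Hcs B1 HB1), Hx2.
Qed.
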